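(* Let $d\ge2$ and let $(\tau_e)_{e\in\mathbb{E}^d}$ be i.i.d. nonnegative edge weights on $\mathbb{Z}^d$. Let $0<a<b$ be such that for every $\delta>0$, $\mathbb{P}(\tau_e\in[a-\delta,a])>0$ and $\mathbb{P}(\tau_e\in[b,2b])>0$. Let $\epsilon<(b-a)/(2b+3a)$ and let $n,m_1,m_2,m_3$ be positive integers with $$1\le m_2\le\epsilon m_3\le\epsilon^2m_1\le\epsilon^3 n.$$ Then for any $\delta>0$, on the event $E_n$ we have $$T_{\Lambda(n)}(-n\mathbf{e}_1,y)\le a(n+2m_3)+am_2\quad\text{for all }y\in\hat R,$$ and $$T_{\Lambda(n)}(x,0)\ge(a-\delta)(n+2m_3)+bm_2\quad\text{for all }x\in\mathbb{Z}^d\text{ with }\|x\|_1=n.$$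
   Context: $\mathbf{e}_i$ is the $i$-th coordinate vector. $\Lambda(n)=\{x\in\mathbb{Z}^d:\|x\|_1\le n\}$. $R=R(m_1,m_2,m_3)=\{x\in\mathbb{Z}^d:-m_1\le x\cdot\mathbf{e}_1\le m_2,\ \sum_{i=2}^d|x\cdot\mathbf{e}_i|\le m_3\}$, and $\hat R=\{x\in R:\exists y\in\mathbb{Z}^d\setminus R\text{ with }\|x-y\|_1=1\}$. $L=\{k\mathbf{e}_1:k=-n,\dots,-m_1\}$. $E_n$ (which depends on $a,b,\delta,n,m_1,m_2,m_3$) is the event that (1) $\tau_e\in[a-\delta,a]$ for all edges $e=\{x,y\}$ with $x,y\in\hat R\cup L$, and (2) $\tau_e\in[b,2b]$ for all other edges $e=\{x,y\}$ with $x,y\in\Lambda(n)$. $T_{\Lambda(n)}(x,y)$ is the infimum of $\sum_{e\in\gamma}\tau_e$ over nearest-neighbor paths $\gamma$ from $x$ to $y$ all of whose vertices lie in $\Lambda(n)$. *)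

(* Defs.v *)
From HB Require Import structures.
From mathcomp Require Import all_boot all_order all_algebra.
From mathcomp Require Import classical_sets reals.
Set Implicit Arguments. Unset Strict Implicit. Unset Printing Implicit Defensive.
Import Order.TTheory GRing.Theory Num.Theory.
Local Open Scope ring_scope.

Definition pt (d : nat) := 'I_d -> int.

Definition norm1 d (x : pt d) : int := \sum_(i < d) `|x i|.
Definition subp d (x y : pt d) : pt d := fun i => x i - y i.
Definition adj d (x y : pt d) : Prop := norm1 (subp x y) = 1.

Definition e1 d : pt d := fun i => ((val i == 0%N) : int).
Definition dotp d (x y : pt d) : int := \sum_(i < d) x i * y i.
Definition zpt d : pt d := fun _ => 0.
Definition scal d (k : int) (x : pt d) : pt d := fun i => k * x i.

Definition inLam d (n : nat) (x : pt d) : Prop := norm1 x <= n%:Z.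

Definition inRect d (m1 m2 m3 : nat) (x : pt d) : Prop :=
  - (m1%:Z) <= dotp x (@e1 d) <= m2%:Z /\
  \sum_(i < d | val i != 0%N) `|dotp x (fun j => ((j == i) : int))| <= m3%:Z.

Definition inRhat d m1 m2 m3 (x : pt d) : Prop :=
  inRect m1 m2 m3 x /\ exists y : pt d, ~ inRect m1 m2 m3 y /\ adj x y.

Definition inL d (n m1 : nat) (x : pt d) : Prop :=
  exists k : int, - (n%:Z) <= k <= - (m1%:Z) /\ x = scal k (@e1 d).

(* A nearest-neighbour path x = p_0, p_1, ..., p_k inside Lambda(n),
   encoded as x and the list [p_1; ...; p_k]. *)
Definition lam_path d (n : nat) (x : pt d) (p : seq (pt d)) (y : pt d) : Prop :=
  last x p = y /\
  (forall i, (i <= size p)%N -> inLam n (nth x (x :: p) i)) /\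
  (forall i, (i < size p)%N -> adj (nth x (x :: p) i) (nth x p i)).

Definition path_weight {R : realType} d (tau : pt d -> pt d -> R)
  (x : pt d) (p : seq (pt d)) : R :=
  \sum_(i < size p) tau (nth x (x :: p) i) (nth x p i).

Definition T_Lam {R : realType} d (tau : pt d -> pt d -> R) (n : nat) (x y : pt d) : R :=
  inf [set w : R | exists p, lam_path n x p y /\ w = path_weight tau x p].

(* The event E_n, as a property of a weight configuration tau
   (tau x y is the weight of the edge {x,y}; symmetry is assumed separately). *)
Definition E_event {R : realType} d (tau : pt d -> pt d -> R)
  (a b delta : R) (n m1 m2 m3 : nat) : Prop :=
  (forall x y : pt d, adj x y ->
     (inRhat m1 m2 m3 x \/ inL n m1 x) -> (inRhat m1 m2 m3 y \/ inL n m1 y) ->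
     a - delta <= tau x y <= a) /\
  (forall x y : pt d, adj x y -> inLam n x -> inLam n y ->
     ~ ((inRhat m1 m2 m3 x \/ inL n m1 x) /\ (inRhat m1 m2 m3 y \/ inL n m1 y)) ->
     b <= tau x y <= 2 * b).

(* Main.v *)
Require Import Defs.
From HB Require Import structures.
From mathcomp Require Import all_boot all_order all_algebra.
From mathcomp Require Import classical_sets reals.
From mathcomp Require Import boolp zify ring lra.
Import Order.TTheory GRing.Theory Num.Theory.
Local Open Scope ring_scope.
Set Implicit Arguments. Unset Strict Implicit.

Lemma lam_path_cons d n (u v x : pt d) q :
  lam_path n u (v :: q) x <-> [/\ inLam n u, adj u v & lam_path n v q x].
Proof.
rewrite /lam_path /=; split.
- move=> [Hl [Hin Had]]; split.
  + exact: (Hin 0%N).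
  + exact: (Had 0%N).
  + split=> //; split.
    * move=> i Hi; have := Hin i.+1 Hi; rewrite /=.
      by rewrite (set_nth_default v) //= ltnS.
    * move=> i Hi; have := Had i.+1 Hi; rewrite /=.
      by rewrite (set_nth_default (s:=v :: q) u) ?(set_nth_default (s:=q) u) // ltnW.
- move=> [Hu Huv [Hl [Hin Had]]]; split=> //; split.
  + case=> [|i] //= Hi; have := Hin i Hi.
    by rewrite (set_nth_default u) //= ltnS.
  + case=> [|i] //= Hi; have := Had i Hi.
    by rewrite (set_nth_default (s:=v :: q) v) ?(set_nth_default (s:=q) v) // ltnW.
Qed.

Lemma path_weight_cons (R : realType) d (tau : pt d -> pt d -> R) (u v : pt d) q :
  path_weight tau u (v :: q) = tau u v + path_weight tau v q.
Proof.
rewrite /path_weight /= big_ord_recl /=; congr (_ + _); apply: eq_bigr => i _.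
rewrite /bump /=.
have Hi := ltn_ord i.
by rewrite (set_nth_default (s:=v :: q) v) ?(set_nth_default (s:=q) v) // ltnW.
Qed.

Lemma lam_path_nil d n (u v : pt d) : lam_path n u [::] v -> u = v.
Proof. by case. Qed.

Lemma lam_path_nil' d n (u : pt d) : inLam n u -> lam_path n u [::] u.
Proof. by move=> H; split=> //; split=> // [[|i]]. Qed.

Lemma lam_path_cat (R : realType) d (tau : pt d -> pt d -> R) n (u v x : pt d) p q :
  lam_path n u p v -> lam_path n v q x ->
  lam_path n u (p ++ q) x /\
  path_weight tau u (p ++ q) = path_weight tau u p + path_weight tau v q.
Proof.
elim: p u => [|w p IH] u /=.
  move=> /lam_path_nil -> H; split => //.
  by rewrite /path_weight big_ord0 add0r.
move=> /lam_path_cons [Hu Huw Hp] Hq.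
have [H1 H2] := IH _ Hp Hq.
split; first by apply/lam_path_cons.
by rewrite !path_weight_cons H2 addrA.
Qed.

Definition Gw (R : realType) d (tau : pt d -> pt d -> R) n (w : R) (u v : pt d) :=
  exists p, lam_path n u p v /\ path_weight tau u p <= w.

Lemma Gw_cat (R : realType) d (tau : pt d -> pt d -> R) n w1 w2 (u v x : pt d) :
  Gw tau n w1 u v -> Gw tau n w2 v x -> Gw tau n (w1 + w2) u x.
Proof.
move=> [p [Hp Wp]] [q [Hq Wq]].
have [H1 H2] := lam_path_cat tau Hp Hq.
by exists (p ++ q); split => //; rewrite H2 lerD.
Qed.

Lemma Gw_mono (R : realType) d (tau : pt d -> pt d -> R) n w1 w2 (u v : pt d) :
  w1 <= w2 -> Gw tau n w1 u v -> Gw tau n w2 u v.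
Proof. by move=> H [p [Hp Wp]]; exists p; split => //; apply: le_trans H. Qed.

Lemma Gw_refl (R : realType) d (tau : pt d -> pt d -> R) n (u : pt d) :
  inLam n u -> Gw tau n 0 u u.
Proof.
by move=> H; exists [::]; split; [exact: lam_path_nil'|rewrite /path_weight big_ord0].
Qed.

Lemma Gw_step (R : realType) d (tau : pt d -> pt d -> R) n (u v : pt d) :
  inLam n u -> inLam n v -> adj u v -> Gw tau n (tau u v) u v.
Proof.
move=> Hu Hv Huv; exists [:: v]; split.
  by apply/lam_path_cons; split => //; exact: lam_path_nil'.
by rewrite path_weight_cons /path_weight big_ord0 addr0.
Qed.

Lemma path_lower (R : realType) d (tau : pt d -> pt d -> R) n (Psi : pt d -> R) :
  (forall u v, inLam n u -> inLam n v -> adj u v -> Psi u - Psi v <= tau u v) ->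
  forall p u w, lam_path n u p w -> Psi u - Psi w <= path_weight tau u p.
Proof.
move=> Hloc; elim=> [|v p IH] u w.
  by move=> /lam_path_nil ->; rewrite subrr /path_weight big_ord0.
move=> /lam_path_cons [Hu Huv Hp].
have Hv : inLam n v by case: Hp => _ [H _]; exact: (H 0%N).
rewrite path_weight_cons.
have -> : Psi u - Psi w = (Psi u - Psi v) + (Psi v - Psi w) by ring.
by apply: lerD; [exact: Hloc | exact: IH].
Qed.

Definition sn d (y : pt d.+1) : int := \sum_(i < d.+1 | val i != 0%N) `|y i|.
Definition upd d (y : pt d) (i : 'I_d) (k : int) : pt d :=
  fun j => if j == i then k else y j.

Lemma neq_ord0 d (i : 'I_d.+1) : (i != ord0) = (val i != 0%N).
Proof. by case: i => [[|i] Hi]. Qed.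

Lemma norm1_split d (y : pt d.+1) : norm1 y = `|y ord0| + sn y.
Proof.
rewrite /norm1 (bigD1 ord0) //=; congr (_ + _).

Qed.

Lemma sn_ge0 d (y : pt d.+1) : 0 <= sn y.
Proof. by apply: sumr_ge0 => i _. Qed.

Lemma dotp_e1 d (y : pt d.+1) : dotp y (@e1 _) = y ord0.
Proof.
rewrite /dotp (bigD1 ord0) //= big1 ?addr0 /e1 /= ?mulr1 // => i.
by rewrite neq_ord0 => /negbTE ->; rewrite mulr0.
Qed.

Lemma dotp_ei d (y : pt d) i : dotp y (fun j => ((j == i) : int)) = y i.
Proof.
rewrite /dotp (bigD1 i) //= eqxx mulr1 big1 ?addr0 // => j /negbTE ->.
by rewrite mulr0.
Qed.

Lemma inRect_iff d m1 m2 m3 (y : pt d.+1) :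
  inRect m1 m2 m3 y <-> (- (m1%:Z) <= y ord0 <= m2%:Z /\ sn y <= m3%:Z).
Proof.
rewrite /inRect dotp_e1.
have -> : \sum_(i < d.+1 | val i != 0%N) `|dotp y (fun j => ((j == i) : int))| = sn y.
  by apply: eq_bigr => i _; rewrite dotp_ei.
by [].
Qed.


Lemma adj_split d (u v : pt d.+1) : adj u v ->
  `|u ord0 - v ord0| + `|sn u - sn v| <= 1.
Proof.
rewrite /adj norm1_split => H.
have E : sn (subp u v) = \sum_(i < d.+1 | val i != 0%N) `|u i - v i| by [].
have : `|sn u - sn v| <= sn (subp u v).
  rewrite E /sn -sumrB; apply: le_trans (ler_norm_sum _ _ _) _.
  by apply: ler_sum => i _; exact: ler_dist_dist.
move: H; rewrite /subp; set A := `|u ord0 - v ord0|; set B := sn (subp u v).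
move=> H1 H2; rewrite -H1; exact: lerD.
Qed.

Lemma upd_same d (y : pt d) i k : upd y i k i = k.
Proof. by rewrite /upd eqxx. Qed.

Lemma upd_other d (y : pt d) i j k : j != i -> upd y i k j = y j.
Proof. by rewrite /upd => /negbTE ->. Qed.

Lemma norm1_upd d (y : pt d) i k : norm1 (subp y (upd y i k)) = `|y i - k|.
Proof.
rewrite /norm1 (bigD1 i) //= /subp upd_same big1 ?addr0 // => j Hj.
by rewrite upd_other // subrr normr0.
Qed.

Lemma adj_upd d (y : pt d) i k : `|y i - k| = 1 -> adj y (upd y i k).
Proof. by rewrite /adj norm1_upd. Qed.

Lemma adj_sym d (u v : pt d) : adj u v -> adj v u.
Proof.
rewrite /adj /norm1 => <-; apply: eq_bigr => i _.
by rewrite /subp distrC.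
Qed.

Lemma sn_upd0 d (y : pt d.+1) k : sn (upd y ord0 k) = sn y.
Proof.
by apply: eq_bigr => i; rewrite -neq_ord0 => Hi; rewrite upd_other.
Qed.

Lemma t_upd d (y : pt d.+1) i k : i != ord0 -> upd y i k ord0 = y ord0.
Proof. by move=> Hi; rewrite upd_other // eq_sym. Qed.
Lemma sn_upd d (y : pt d.+1) i k : i != ord0 ->
  sn (upd y i k) = sn y - `|y i| + `|k|.
Proof.
move=> Hi; rewrite /sn.
have Hi' : val i != 0%N by rewrite -neq_ord0.
rewrite (bigD1 i Hi') /=.
rewrite [in RHS](bigD1 i Hi') /= upd_same.
have -> : \sum_(j < d.+1 | (val j != 0%N) && (j != i)) `|upd y i k j| =
          \sum_(j < d.+1 | (val j != 0%N) && (j != i)) `|y j|.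
  by apply: eq_bigr => j /andP [_ Hj]; rewrite upd_other.
move: (\sum_(j < d.+1 | _) _) => X; move: `|k| `|y i| => A B.
by rewrite [B + X]addrC addrK addrC.
Qed.

Lemma Rhat_char d m1 m2 m3 (y : pt d.+1) : inRhat m1 m2 m3 y ->
  [/\ - (m1%:Z) <= y ord0 <= m2%:Z, sn y <= m3%:Z &
     (y ord0 = - (m1%:Z) \/ y ord0 = m2%:Z \/ sn y = m3%:Z)].
Proof.
move=> [/inRect_iff [Ht Hs] [z [Hz Hadj]]]; split => //.
have H := adj_split Hadj; have := sn_ge0 z; have := sn_ge0 y; move=> ? ?.
have [Hn|Hn] := boolP [|| y ord0 == - (m1%:Z), y ord0 == m2%:Z | sn y == m3%:Z].
  by case/or3P: Hn => /eqP ->; auto.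
exfalso; apply: Hz; apply/inRect_iff.
move: Hn; rewrite !negb_or => /and3P [/eqP ? /eqP ? /eqP ?].
split; lia.
Qed.

Lemma L_char d n m1 (y : pt d.+1) : inL n m1 y ->
  - (n%:Z) <= y ord0 <= - (m1%:Z) /\ sn y = 0.
Proof.
move=> [k [Hk ->]]; split.
  by rewrite /scal /e1 /= mulr1.
rewrite /sn big1 // => i Hi; rewrite /scal /e1 /=.
by move/negbTE: Hi => ->; rewrite mulr0 normr0.
Qed.

Lemma sn0_eq d (y : pt d.+1) : sn y = 0 -> y = scal (y ord0) (@e1 _).
Proof.
move=> H; apply: funext => i; rewrite /scal /e1.
case: (boolP (val i == 0%N)) => Hi.
  have -> : i = ord0 by apply: val_inj; apply/eqP.
  by rewrite /= mulr1.
rewrite /= mulr0; apply/eqP; rewrite -normr_eq0; apply/eqP.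
apply/le_anti; rewrite normr_ge0 andbT -H /sn (bigD1 i) //=.
by rewrite lerDl sumr_ge0.
Qed.

Lemma sn_pos_ex d (y : pt d.+1) : sn y != 0 -> exists2 i, i != ord0 & y i != 0.
Proof.
move=> H; apply/exists_inP => /=.
apply: contraNT H; rewrite negb_exists_in => /forall_inP Hall.
rewrite /sn big1 // => i Hi; apply/eqP; rewrite normr_eq0.
have := Hall i; rewrite neq_ord0 => /(_ Hi); by rewrite negbK.
Qed.

Definition i1 d : 'I_d.+2 := @Ordinal d.+2 1 isT.
Lemma i1_neq0 d : i1 d != ord0. Proof. by []. Qed.

Definition stepup (k : int) : int := if 0 <= k then k + 1 else k - 1.
Definition stepdn (k : int) : int := if 0 < k then k - 1 else k + 1.

Lemma stepup_norm k : `|stepup k| = `|k| + 1.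
Proof. rewrite /stepup; case: ifP => H; lia. Qed.
Lemma stepup_adj k : `|k - stepup k| = 1.
Proof. rewrite /stepup; case: ifP => H; lia. Qed.
Lemma stepdn_norm k : k != 0 -> `|stepdn k| = `|k| - 1.
Proof. move=> /eqP Hk; rewrite /stepdn; case: ifP => H; lia. Qed.
Lemma stepdn_adj k : `|k - stepdn k| = 1.
Proof. rewrite /stepdn; case: ifP => H; lia. Qed.

Lemma upd_upd d (y : pt d) i k k' : upd (upd y i k) i k' = upd y i k'.
Proof. by apply: funext => j; rewrite /upd /=; case: (j == i). Qed.

Lemma upd_id d (y : pt d) i : upd y i (y i) = y.
Proof. by apply: funext => j; rewrite /upd /=; case: eqP => // ->. Qed.

Lemma Rhat_intro d m1 m2 m3 (y : pt d.+2) :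
  - (m1%:Z) <= y ord0 <= m2%:Z -> sn y <= m3%:Z ->
  (y ord0 = - (m1%:Z) \/ y ord0 = m2%:Z \/ sn y = m3%:Z) -> inRhat m1 m2 m3 y.
Proof.
move=> Ht Hs H; split; first by apply/inRect_iff.
case: H => [H|[H|H]].
- exists (upd y ord0 (y ord0 - 1)); split.
    by move/inRect_iff; rewrite upd_same H; lia.
  by apply: adj_upd; lia.
- exists (upd y ord0 (y ord0 + 1)); split.
    by move/inRect_iff; rewrite upd_same H; lia.
  by apply: adj_upd; lia.
- exists (upd y (i1 d) (stepup (y (i1 d)))); split.
    by move/inRect_iff; rewrite sn_upd // stepup_norm H; lia.
  by apply: adj_upd; exact: stepup_adj.
Qed.

Lemma inLam_of d n (y : pt d.+1) : `|y ord0| + sn y <= n%:Z -> inLam n y.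
Proof. by rewrite /inLam norm1_split. Qed.

Lemma scal_t d k : scal k (@e1 d.+1) ord0 = k.
Proof. by rewrite /scal /e1 /= mulr1. Qed.

Lemma scal_sn d k : sn (scal k (@e1 d.+1)) = 0.
Proof.
rewrite /sn big1 // => i Hi; rewrite /scal /e1 /=.
by move/negbTE: Hi => ->; rewrite mulr0 normr0.
Qed.

Lemma adj_scal d k k' : `|k - k'| = 1 -> adj (scal k (@e1 d.+1)) (scal k' (@e1 d.+1)).
Proof.
move=> H; rewrite /adj norm1_split /subp !scal_t H.
have -> : sn (fun i => scal k (@e1 d.+1) i - scal k' (@e1 d.+1) i) = 0.
  rewrite /sn big1 // => i Hi; rewrite /scal /e1 /=.
  by move/negbTE: Hi => ->; rewrite !mulr0 subrr normr0.
by rewrite addr0.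
Qed.

Lemma Gw_line (R : realType) d (tau : pt d -> pt d -> R) n (a : R) (f : nat -> pt d) k :
  (forall j, (j < k)%N -> Gw tau n a (f j) (f j.+1)) -> inLam n (f 0%N) ->
  Gw tau n (a * k%:R) (f 0%N) (f k).
Proof.
move=> H H0; elim: k H => [|k IH] H.
  by rewrite mulr0; exact: Gw_refl.
rewrite [_%:R]mulrSr mulrDr mulr1; apply: (Gw_cat (v:=f k)); last exact: H.
by apply: IH => j Hj; apply: H; exact: ltnW.
Qed.

Lemma norm1_upd' d (y : pt d) i k : norm1 (upd y i k) = norm1 y - `|y i| + `|k|.
Proof.
rewrite /norm1 (bigD1 i) //= [in RHS](bigD1 i) //= upd_same.
have -> : \sum_(j < d | j != i) `|upd y i k j| = \sum_(j < d | j != i) `|y j|.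
  by apply: eq_bigr => j Hj; rewrite upd_other.
move: (\sum_(j < d | _) _) => X; move: `|k| `|y i| => A B.
by rewrite [B + X]addrC addrK addrC.
Qed.

Lemma norm1_ex d (y : pt d) : norm1 y != 0 -> exists i, y i != 0.
Proof.
move=> H; apply/existsP.
apply: contraNT H; rewrite negb_exists => /forallP Hall.
rewrite /norm1 big1 // => i _; apply/eqP; rewrite normr_eq0.
by have := Hall i; rewrite negbK.
Qed.

Lemma norm1_zero d (y : pt d) : norm1 y = 0 -> y = @zpt d.
Proof.
move=> H; apply: funext => i; rewrite /zpt.
apply/eqP; rewrite -normr_eq0; apply/eqP.
apply/le_anti; rewrite normr_ge0 andbT -H /norm1 (bigD1 i) //=.
by rewrite lerDl sumr_ge0.
Qed.

Lemma norm1_ge0 d (y : pt d) : 0 <= norm1 y.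
Proof. exact: sumr_ge0. Qed.

Lemma descent (R : realType) d (tau : pt d -> pt d -> R) n :
  forall N (y : pt d), norm1 y = N%:Z -> (N <= n)%N -> exists w, Gw tau n w y (@zpt d).
Proof.
elim=> [|N IH] y Hy HN.
  exists 0; rewrite (norm1_zero Hy); apply: Gw_refl.
  by rewrite /inLam (_ : norm1 (@zpt d) = 0) // /norm1 big1 // => i _; rewrite normr0.
have [i Hi] : exists i, y i != 0 by apply: norm1_ex; rewrite Hy.
set y' := upd y i (stepdn (y i)).
have Hy' : norm1 y' = N%:Z by rewrite /y' norm1_upd' stepdn_norm // Hy; lia.
have [w Hw] := IH y' Hy' (ltnW HN).
exists (tau y y' + w); apply: Gw_cat Hw; apply: Gw_step.
- by rewrite /inLam Hy; lia.
- by rewrite /inLam Hy'; lia.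
- by apply: adj_upd; exact: stepdn_adj.
Qed.

Definition goodH (R : realType) d (tau : pt d -> pt d -> R) (a : R) n m1 m2 m3 :=
  forall x y, adj x y -> (inRhat m1 m2 m3 x \/ inL n m1 x) ->
    (inRhat m1 m2 m3 y \/ inL n m1 y) -> tau x y <= a.

Lemma good_step (R : realType) d (tau : pt d -> pt d -> R) (a : R) n m1 m2 m3 u v :
  goodH tau a n m1 m2 m3 ->
  (inRhat m1 m2 m3 u \/ inL n m1 u) -> (inRhat m1 m2 m3 v \/ inL n m1 v) ->
  inLam n u -> inLam n v -> adj u v -> Gw tau n a u v.
Proof.
move=> Hg Su Sv Lu Lv Huv; apply: Gw_mono (Gw_step tau Lu Lv Huv).
exact: Hg.
Qed.

Lemma segL (R : realType) d (tau : pt d.+2 -> pt d.+2 -> R) (a : R) n m1 m2 m3 :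
  goodH tau a n m1 m2 m3 -> (m1 <= n)%N ->
  Gw tau n (a * (n - m1)%:R) (scal (- n%:Z) (@e1 _)) (scal (- m1%:Z) (@e1 _)).
Proof.
move=> Hg Hmn.
have H := @Gw_line R _ tau n a (fun j => scal (- n%:Z + j%:Z) (@e1 _)) (n - m1).
rewrite /= addr0 (_ : - n%:Z + (n - m1)%:Z = - m1%:Z) in H; last by lia.
apply: H; last by apply: inLam_of; rewrite scal_t scal_sn; lia.
move=> j Hj; apply: (good_step Hg).
- by right; exists (- n%:Z + j%:Z); split => //; lia.
- by right; exists (- n%:Z + j.+1%:Z); split => //; lia.
- by apply: inLam_of; rewrite scal_t scal_sn; lia.
- by apply: inLam_of; rewrite scal_t scal_sn; lia.
- by apply: adj_scal; lia.
Qed.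

Lemma face_left (R : realType) d (tau : pt d.+2 -> pt d.+2 -> R) (a : R) n m1 m2 m3 :
  goodH tau a n m1 m2 m3 -> (m1 + m3 <= n)%N ->
  forall N y, y ord0 = - m1%:Z -> sn y = N%:Z -> (N <= m3)%N ->
  Gw tau n (a * N%:R) (scal (- m1%:Z) (@e1 _)) y.
Proof.
move=> Hg Hn; elim=> [|N IH] y Ht Hs HN.
  rewrite mulr0 (sn0_eq Hs) Ht; apply: Gw_refl.
  by apply: inLam_of; rewrite scal_t scal_sn; lia.
have [i Hi Hyi] : exists2 i, i != ord0 & y i != 0 by apply: sn_pos_ex; rewrite Hs.
set y' := upd y i (stepdn (y i)).
have Hs' : sn y' = N%:Z by rewrite /y' sn_upd // stepdn_norm // Hs; lia.
have Ht' : y' ord0 = - m1%:Z by rewrite /y' t_upd.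
rewrite [_%:R]mulrSr mulrDr mulr1; apply: (Gw_cat (v := y')).
  by apply: IH => //; exact: ltnW.
have := sn_ge0 y => Hs0.
apply: (good_step Hg).
- by left; apply: Rhat_intro; rewrite ?Ht' ?Hs'; try lia; left.
- by left; apply: Rhat_intro; rewrite ?Ht ?Hs; try lia; left.
- by apply: inLam_of; rewrite Ht' Hs'; lia.
- by apply: inLam_of; rewrite Ht Hs; lia.
- by apply: adj_sym; apply: adj_upd; exact: stepdn_adj.
Qed.

Lemma lateral (R : realType) d (tau : pt d.+2 -> pt d.+2 -> R) (a : R) n m1 m2 m3 :
  goodH tau a n m1 m2 m3 -> (m1 + m3 <= n)%N -> (m2 + m3 <= n)%N ->
  forall k y, (k <= m1 + m2)%N -> sn y = m3%:Z ->
  Gw tau n (a * k%:R) (upd y ord0 (- m1%:Z)) (upd y ord0 (- m1%:Z + k%:Z)).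
Proof.
move=> Hg Hn1 Hn2 k y Hk Hs.
have H := @Gw_line R _ tau n a (fun j => upd y ord0 (- m1%:Z + j%:Z)) k.
rewrite /= addr0 in H.
have HL : forall j, (j <= k)%N -> inLam n (upd y ord0 (- m1%:Z + j%:Z)).
  move=> j Hj; apply: inLam_of; rewrite sn_upd0 Hs {1}/upd eqxx; lia.
have HS : forall j, (j <= k)%N -> inRhat m1 m2 m3 (upd y ord0 (- m1%:Z + j%:Z)).
  by move=> j Hj; apply: Rhat_intro; rewrite ?upd_same ?sn_upd0 ?Hs; try lia; right; right.
apply: H; last by move: (HL 0%N isT); rewrite addr0.
move=> j Hj; apply: (good_step Hg).
- by left; apply: HS; exact: ltnW.
- by left; apply: HS.
- by apply: HL; exact: ltnW.
- by apply: HL.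
- rewrite -[X in adj _ X](upd_upd y ord0 (- m1%:Z + j%:Z)).
  by apply: adj_upd; rewrite upd_same; lia.
Qed.

Lemma face_right (R : realType) d (tau : pt d.+2 -> pt d.+2 -> R) (a : R) n m1 m2 m3 :
  goodH tau a n m1 m2 m3 -> (m2 + m3 <= n)%N ->
  forall N y, y ord0 = m2%:Z -> sn y + N%:Z = m3%:Z ->
  exists z, [/\ z ord0 = m2%:Z, sn z = m3%:Z & Gw tau n (a * N%:R) z y].
Proof.
move=> Hg Hn; elim=> [|N IH] y Ht Hs.
  exists y; split => //; first by rewrite -Hs addr0.
  rewrite mulr0; apply: Gw_refl; apply: inLam_of; have := sn_ge0 y; lia.
set y' := upd y (i1 d) (stepup (y (i1 d))).
have Hs' : sn y' = sn y + 1 by rewrite /y' sn_upd // stepup_norm; lia.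
have Ht' : y' ord0 = m2%:Z by rewrite /y' t_upd.
have [z [Hz1 Hz2 Hz3]] := IH y' Ht' ltac:(rewrite Hs'; lia).
exists z; split => //.
rewrite [_%:R]mulrSr mulrDr mulr1; apply: (Gw_cat Hz3).
have := sn_ge0 y => Hs0.
apply: (good_step Hg).
- by left; apply: Rhat_intro; rewrite ?Ht' ?Hs'; try lia; right; left.
- by left; apply: Rhat_intro; rewrite ?Ht ?Hs; try lia; right; left.
- by apply: inLam_of; rewrite Ht' Hs'; lia.
- by apply: inLam_of; rewrite Ht; lia.
- by apply: adj_sym; apply: adj_upd; exact: stepup_adj.
Qed.

Lemma wsum (R : realType) (a : R) (k1 k2 K : nat) : 0 <= a -> (k1 + k2 <= K)%N ->
  a * k1%:R + a * k2%:R <= a * K%:R.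
Proof. by move=> Ha Hk; rewrite -mulrDr -natrD ler_wpM2l // ler_nat. Qed.

Lemma part1 (R : realType) d (tau : pt d.+2 -> pt d.+2 -> R) (a : R) n m1 m2 m3 :
  goodH tau a n m1 m2 m3 -> 0 <= a -> (m1 + m3 <= n)%N -> (m2 + m3 <= n)%N ->
  forall y, inRhat m1 m2 m3 y ->
  Gw tau n (a * (n + 2 * m3 + m2)%:R) (scal (- n%:Z) (@e1 _)) y.
Proof.
move=> Hg Ha Hn1 Hn2 y /Rhat_char [Ht Hs Hc].
have HA := segL Hg (leq_trans (leq_addr m3 m1) Hn1).
have Hs0 := sn_ge0 y.
case: Hc => [Hc|[Hc|Hc]].
- have [N HN] : exists N : nat, sn y = N%:Z by exists (`|sn y|%N); lia.
  have HB := face_left Hg Hn1 Hc HN ltac:(lia).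
  apply: Gw_mono (Gw_cat HA HB); apply: wsum => //; lia.
- have [N HN] : exists N : nat, sn y + N%:Z = m3%:Z by exists (absz (m3%:Z - sn y)); lia.
  have [z [Hz1 Hz2 Hz3]] := face_right Hg Hn2 Hc HN.
  have HB := @face_left R d tau a n m1 m2 m3 Hg Hn1 m3 (upd z ord0 (- m1%:Z))
     (upd_same _ _ _) ltac:(by rewrite sn_upd0) (leqnn _).
  have HC := lateral Hg Hn1 Hn2 (leqnn (m1 + m2)) Hz2.
  rewrite (_ : - m1%:Z + (m1 + m2)%N%:Z = z ord0) ?upd_id in HC; last by rewrite Hz1; lia.
  apply: Gw_mono (Gw_cat (Gw_cat (Gw_cat HA HB) HC) Hz3).
  rewrite -!mulrDr -!natrD ler_wpM2l // ler_nat; lia.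
- have HB := @face_left R d tau a n m1 m2 m3 Hg Hn1 m3 (upd y ord0 (- m1%:Z))
     (upd_same _ _ _) ltac:(by rewrite sn_upd0) (leqnn _).
  have [k Hk] : exists k : nat, y ord0 + m1%:Z = k%:Z by exists (absz (y ord0 + m1%:Z)); lia.
  have HC := lateral Hg Hn1 Hn2 (k := k) ltac:(lia) Hc.
  rewrite (_ : - m1%:Z + k%:Z = y ord0) ?upd_id in HC; last by lia.
  apply: Gw_mono (Gw_cat (Gw_cat HA HB) HC).
  rewrite -!mulrDr -!natrD ler_wpM2l // ler_nat; lia.
Qed.

Lemma max_lip (R : realType) (x y x' y' e : R) :
  x <= x' + e -> y <= y' + e -> Num.max x y <= Num.max x' y' + e.
Proof.
move=> H1 H2; rewrite ge_max; apply/andP; split.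
  by apply: le_trans H1 _; rewrite lerD2r le_max lexx.
by apply: le_trans H2 _; rewrite lerD2r le_max lexx orbT.
Qed.

Lemma min_lip (R : realType) (x y x' y' e : R) :
  x <= x' + e -> y <= y' + e -> Num.min x y <= Num.min x' y' + e.
Proof.
move=> H1 H2; rewrite -lerBlDr le_min; apply/andP; split; rewrite lerBlDr.
  by apply: le_trans H1; rewrite ge_min lexx.
by apply: le_trans H2; rewrite ge_min lexx orbT.
Qed.

Definition sig (R : realType) (M2 M3 K t s : R) :=
  Num.max (M2 - t + s) (Num.min (M2 - t + 2 * M3 - s) (K * (M2 - t))).

Lemma sig_right (R : realType) (M2 M3 K t s : R) :
  0 <= K -> (t = M2 \/ s = M3) -> 0 <= s -> sig M2 M3 K t s = M2 - t + s.
Proof.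
move=> HK Hc Hs; rewrite /sig max_l // ge_min; case: Hc => ->.
  by apply/orP; right; rewrite subrr mulr0; lra.
by apply/orP; left; lra.
Qed.

Lemma sig_left (R : realType) (M1 M2 M3 K t s : R) :
  1 <= K -> K * (M1 + M2) = M1 + M2 + 2 * M3 -> t <= - M1 -> 0 <= s -> s <= M3 ->
  sig M2 M3 K t s = M2 - t + 2 * M3 - s.
Proof.
move=> HK HKe Ht Hs0 Hs; have HQ : M2 - t + 2 * M3 - s <= K * (M2 - t).
  have : 0 <= (K - 1) * ((M2 - t) - (M1 + M2)) by apply: mulr_ge0; lra.
  nra.
rewrite /sig min_l // max_r //; lra.
Qed.

Lemma sig_lip (R : realType) (M2 M3 K t s t' s' : R) :
  1 <= K -> `|t - t'| + `|s - s'| <= 1 ->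
  sig M2 M3 K t s <= sig M2 M3 K t' s' + K.
Proof.
move=> HK H.
have A1 := ler_norm (t' - t); rewrite distrC in A1.
have A2 := ler_norm (s - s').
have A3 := normr_ge0 (s - s').
apply: max_lip; first by lra.
have A4 := ler_norm (s' - s); rewrite distrC in A4.
apply: min_lip; first by lra.
have : K * (t' - t) <= K * 1 by rewrite ler_wpM2l //; lra.
lra.
Qed.

Definition Hf (R : realType) (b c M2 M3 K t s : R) := b * M2 + c * sig M2 M3 K t s.
Definition Psi (R : realType) (b c mu M2 M3 K t s : R) :=
  Num.max (Num.min (b * (`|t| + s)) (Hf b c M2 M3 K t s)) (b * (`|t| + s) + mu).

Lemma Psi_lip (R : realType) (b c mu M2 M3 K t s t' s' : R) :
  0 <= c -> c * K <= b -> 1 <= K -> `|t - t'| + `|s - s'| <= 1 ->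
  Psi b c mu M2 M3 K t s <= Psi b c mu M2 M3 K t' s' + b.
Proof.
move=> Hc HcK HK H.
have Hb : 0 <= b by apply: le_trans HcK; apply: mulr_ge0 => //; lra.
have HN : b * (`|t| + s) <= b * (`|t'| + s') + b.
  have A1 := lerB_dist t t'.
  have A2 := ler_norm (s - s').
  have : b * (`|t| + s - (`|t'| + s')) <= b * 1 by rewrite ler_wpM2l //; lra.
  lra.
have HH : Hf b c M2 M3 K t s <= Hf b c M2 M3 K t' s' + b.
  have := sig_lip M2 M3 HK H => Hs.
  have : c * sig M2 M3 K t s <= c * (sig M2 M3 K t' s' + K) by rewrite ler_wpM2l.
  rewrite /Hf; lra.
apply: max_lip; first exact: min_lip.
lra.
Qed.

Lemma Psi_eq (R : realType) (b c mu M2 M3 K t s : R) :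
  Hf b c M2 M3 K t s <= b * (`|t| + s) -> b * (`|t| + s) + mu <= Hf b c M2 M3 K t s ->
  Psi b c mu M2 M3 K t s = Hf b c M2 M3 K t s.
Proof. by move=> H1 H2; rewrite /Psi min_r // max_l. Qed.

Definition SR (R : realType) (M1 M2 M3 Nn t s : R) :=
  (- M1 <= t <= M2 /\ 0 <= s <= M3 /\ (t = - M1 \/ t = M2 \/ s = M3)) \/
  (s = 0 /\ - Nn <= t <= - M1).

Lemma sig_S (R : realType) (M1 M2 M3 Nn K t s : R) :
  1 <= K -> K * (M1 + M2) = M1 + M2 + 2 * M3 -> 0 <= M3 ->
  SR M1 M2 M3 Nn t s ->
  (t <= - M1 -> sig M2 M3 K t s = M2 - t + 2 * M3 - s) /\
  (- M1 < t -> sig M2 M3 K t s = M2 - t + s).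
Proof.
move=> HK HKe HM3 [[/andP [Ht1 Ht2] [/andP [Hs1 Hs2] Hc]]|[Hs /andP [Ht1 Ht2]]]; split => Ht.
- by apply: (sig_left (M1:=M1)).
- apply: sig_right => //; first lra.
  case: Hc => [H|[H|H]]; [lra|by left|by right].
- apply: (sig_left (M1:=M1)) => //; lra.
- lra.
Qed.

Lemma sig_good (R : realType) (M1 M2 M3 Nn K t s t' s' : R) :
  1 <= K -> K * (M1 + M2) = M1 + M2 + 2 * M3 -> 0 <= M3 -> 1 < M1 + M2 ->
  SR M1 M2 M3 Nn t s -> SR M1 M2 M3 Nn t' s' ->
  `|t - t'| + `|s - s'| <= 1 ->
  (t <= - M1 /\ t' <= - M1) \/ (- M1 < t /\ - M1 < t') \/ s = s' ->
  sig M2 M3 K t s <= sig M2 M3 K t' s' + 1.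
Proof.
move=> HK HKe HM3 HM12 HS HS' H Hc.
have [L1 R1] := sig_S HK HKe HM3 HS.
have [L2 R2] := sig_S HK HKe HM3 HS'.
have A1 := ler_norm (t' - t); rewrite distrC in A1.
have A2 := ler_norm (s - s').
have A4 := ler_norm (s' - s); rewrite distrC in A4.
have A5 := ler_norm (t - t').
have A3 := normr_ge0 (s - s').
have A6 := normr_ge0 (t - t').
case: Hc => [[H1 H2]|[[H1 H2]|Hss]].
- rewrite L1 // L2 //; lra.
- rewrite R1 // R2 //; lra.
- subst s'.
  have [H1|H1] := lerP t (- M1); have [H2|H2] := lerP t' (- M1).
  + rewrite L1 // L2 //; lra.
  + rewrite L1 // R2 //.
    case: HS' => [[_ [_ [Hc|[Hc|Hc]]]]|[_ /andP [_ Hc]]]; try lra.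
  + rewrite R1 // L2 //.
    case: HS => [[_ [_ [Hc|[Hc|Hc]]]]|[_ /andP [_ Hc]]]; try lra.
  + rewrite R1 // R2 //; lra.
Qed.

Lemma S_Hf (R : realType) (b c M1 M2 M3 Nn K t s : R) :
  0 <= c -> c <= b -> 1 <= K -> K * (M1 + M2) = M1 + M2 + 2 * M3 ->
  0 <= M1 -> 0 <= M2 -> 0 <= M3 ->
  (b + c) * M2 <= (b - c) * M3 ->
  (b + c) * M2 + 2 * c * M3 <= (b - c) * M1 ->
  b * (M1 + M2 + M3) + 2 * c * M3 <= (b - c) * Nn ->
  SR M1 M2 M3 Nn t s ->
  Hf b c M2 M3 K t s <= b * (`|t| + s) /\
  b * (`|t| + s) + (b * M2 + c * (Nn + 2 * M3) - b * Nn) <= Hf b c M2 M3 K t s.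
Proof.
move=> Hc Hcb HK HKe HM1 HM2 HM3 F1 F2 F3 HS.
have [L1 R1] := sig_S HK HKe HM3 HS.
rewrite /Hf.
have Hbc : 0 <= b - c by lra.
case: HS => [[/andP [Ht1 Ht2] [/andP [Hs1 Hs2] Hcase]]|[Hs /andP [Ht1 Ht2]]].
- have Hsig0 : 0 <= sig M2 M3 K t s.
    have [H|H] := lerP t (- M1); [rewrite L1 //|rewrite R1 //]; lra.
  have Hcs : 0 <= c * sig M2 M3 K t s by apply: mulr_ge0.
  have Ha : `|t| <= M1 + M2 by rewrite ler_norml; apply/andP; split; lra.
  have Ha0 := normr_ge0 t.
  have P1 : b * (`|t| + s) <= b * (M1 + M2 + M3).
    by apply: ler_wpM2l; lra.
  have P2 : c * Nn <= b * Nn - (b - c) * Nn by lra.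
  split; last by lra.
  have [H|H] := lerP t (- M1).
  + rewrite L1 //.
    have Htn : `|t| = - t by rewrite ler0_norm //; lra.
    rewrite Htn.
    have Q1 : (b - c) * M1 <= (b - c) * (- t) by apply: ler_wpM2l; lra.
    have Q2 : 0 <= (b + c) * s by apply: mulr_ge0; lra.
    nra.
  + rewrite R1 //.
    case: Hcase => [Hc'|[Hc'|Hc']]; first lra.
    * subst t.
      have Q2 : 0 <= (b - c) * s by apply: mulr_ge0; lra.
      rewrite ger0_norm //; nra.
    * subst s.
      have A1 := ler_norm t; have A2 := ler_norm (- t); rewrite normrN in A2.
      have Q1 : c * (- t) <= b * `|t|.
        apply: le_trans (_ : c * `|t| <= _); first by apply: ler_wpM2l; lra.
        by apply: ler_wpM2r.
      nra.
- subst s.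
  rewrite L1 // addr0.
  have Htn : `|t| = - t by rewrite ler0_norm //; lra.
  rewrite Htn.
  have Q1 : (b - c) * M1 <= (b - c) * (- t) by apply: ler_wpM2l; lra.
  have Q3 : 0 <= (b - c) * (Nn + t) by apply: mulr_ge0; lra.
  have Q4 : 0 <= c * M2 by apply: mulr_ge0.
  split; nra.
Qed.

Lemma Kfacts (R : realType) (b c M1 M2 M3 : R) :
  0 < M1 + M2 -> 0 <= M3 -> c * (M1 + M2 + 2 * M3) <= b * (M1 + M2) ->
  let K := (M1 + M2 + 2 * M3) / (M1 + M2) in
  [/\ 1 <= K, K * (M1 + M2) = M1 + M2 + 2 * M3 & c * K <= b].
Proof.
move=> HM HM3 Hc K.
have HKe : K * (M1 + M2) = M1 + M2 + 2 * M3 by rewrite /K divfK // gt_eqF.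
split => //.
- by rewrite /K ler_pdivlMr // mul1r; lra.
- by rewrite /K mulrA ler_pdivrMr.
Qed.

Lemma Ffacts (R : realType) (a b c eps M1 M2 M3 Nn : R) :
  0 < a -> a < b -> 0 <= c -> c <= a ->
  eps < (b - a) / (2 * b + 3 * a) ->
  0 <= M1 -> 0 <= M3 -> 0 <= Nn ->
  1 <= M2 -> M2 <= eps * M3 -> eps * M3 <= eps ^+ 2 * M1 -> eps ^+ 2 * M1 <= eps ^+ 3 * Nn ->
  [/\ (b + c) * M2 <= (b - c) * M3,
      (b + c) * M2 + 2 * c * M3 <= (b - c) * M1,
      b * (M1 + M2 + M3) + 2 * c * M3 <= (b - c) * Nn,
      M2 <= M3 & M3 <= M1].
Proof.
move=> Ha Hab Hc Hca He HM1 HM3 HNn HM2 H1 H2 H3.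
have Hd : 0 < 2 * b + 3 * a by lra.
have E : eps * (2 * b + 3 * a) < b - a by rewrite -ltr_pdivlMr.
have Hep : 0 < eps.
  rewrite ltNge; apply/negP => Hn.
  have : eps * M3 <= 0 by apply: mulr_le0_ge0.
  lra.
have Hep2 : eps * 2 < 1 by nra.
have G1 : M3 <= eps * M1.
  by rewrite -(ler_pM2l Hep) mulrA -expr2.
have G2 : M1 <= eps * Nn.
  have Hep2' : 0 < eps ^+ 2 by apply: exprn_gt0.
  by rewrite -(ler_pM2l Hep2') mulrA -exprSr.
have G1' : eps * M1 <= M1 by nra.
have G2' : eps * Nn <= Nn by nra.
have HM23 : M2 <= M3 by nra.
have HM31 : M3 <= M1 by lra.
split => //.
- nra.
- nra.
- have G3 : M3 <= eps * (eps * Nn) by nra.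
  have G4 : eps * (eps * Nn) * 2 <= eps * Nn by nra.
  nra.
Qed.

Lemma SR_of (R : realType) d n m1 m2 m3 (u : pt d.+1) :
  (inRhat m1 m2 m3 u \/ inL n m1 u) ->
  SR (m1%:R : R) m2%:R m3%:R n%:R (u ord0)%:~R (sn u)%:~R.
Proof.
have E : forall k : nat, ((k%:Z)%:~R : R) = k%:R by [].
case=> [/Rhat_char [Ht Hs Hc]|/L_char [Ht Hs]].
- left; have Hs0 := sn_ge0 u.
  split; [|split].
  + by move: Ht => /andP [H1 H2]; rewrite -E -E -intrN !ler_int H1 H2.
  + by apply/andP; split; [rewrite ler0z | rewrite -E ler_int].
  + case: Hc => [H|[H|H]]; rewrite H ?intrN; auto.
- right; split; first by rewrite Hs.
  by move: Ht => /andP [H1 H2]; rewrite -E -E -!intrN !ler_int H1 H2.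
Qed.

Lemma mix_int (tu tv su sv : int) (m : nat) : `|tu - tv| + `|su - sv| <= 1 ->
  (tu <= - m%:Z /\ tv <= - m%:Z) \/ (- m%:Z < tu /\ - m%:Z < tv) \/ su = sv.
Proof. lia. Qed.

Lemma mix_real (R : realType) (m : nat) (tu tv su sv : int) : `|tu - tv| + `|su - sv| <= 1 ->
  ((tu%:~R : R) <= - m%:R /\ (tv%:~R : R) <= - m%:R) \/
  (- m%:R < (tu%:~R : R) /\ - m%:R < (tv%:~R : R)) \/ (su%:~R : R) = sv%:~R.
Proof.
move=> H; have E : ((m%:Z)%:~R : R) = m%:R by [].
rewrite -E -intrN !ler_int !ltr_int.
case: (mix_int m H) => [[H1 H2]|[[H1 H2]|H3]]; [left|right; left|right; right] => //.
by rewrite H3.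
Qed.

Lemma part2 (R : realType) d (tau : pt d.+2 -> pt d.+2 -> R)
  (a b eps delta : R) (n m1 m2 m3 : nat) :
  (forall x y, 0 <= tau x y) ->
  0 < a -> a < b ->
  eps < (b - a) / (2 * b + 3 * a) ->
  (0 < m1)%N -> 
  1 <= (m2%:R : R) -> m2%:R <= eps * m3%:R ->
  eps * m3%:R <= eps ^+ 2 * m1%:R -> eps ^+ 2 * m1%:R <= eps ^+ 3 * n%:R ->
  0 < delta -> E_event tau a b delta n m1 m2 m3 ->
  (forall x : pt d.+2, norm1 x = n%:Z ->
     (a - delta) * (n + 2 * m3)%:R + b * m2%:R <= T_Lam tau n x (@zpt _)).
Proof.
move=> Htau0 Ha Hab He Hm1 HM2 H1 H2 H3 Hdel [HE1 HE2] x Hx.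
set c := Num.max (a - delta) 0.
have Hc0 : 0 <= c by rewrite le_max lexx orbT.
have Hca : c <= a by rewrite ge_max; apply/andP; split; lra.
set M1 : R := m1%:R; set M2 : R := m2%:R; set M3 : R := m3%:R; set Nn : R := n%:R.
have HM1 : 1 <= M1 by rewrite /M1 ler1n.
have HM3 : 0 <= M3 by rewrite /M3 ler0n.
have HNn : 0 <= Nn by rewrite /Nn ler0n.
have [F1 F2 F3 G1 G2] := Ffacts Ha Hab Hc0 Hca He (ltW (lt_le_trans ltr01 HM1)) HM3 HNn HM2 H1 H2 H3.
have HbM2 : 0 <= b * M2 by apply: mulr_ge0; lra.
have HKc : c * (M1 + M2 + 2 * M3) <= b * (M1 + M2) by nra.
have HM12 : 0 < M1 + M2 by lra.
have [HK1 HKe HcK] := Kfacts HM12 HM3 HKc.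
set K := (M1 + M2 + 2 * M3) / (M1 + M2) in HK1 HKe HcK.
set mu := b * M2 + c * (Nn + 2 * M3) - b * Nn.
pose P (u : pt d.+2) := Psi b c mu M2 M3 K (u ord0)%:~R (sn u)%:~R.
have Hloc : forall u v, inLam n u -> inLam n v -> adj u v -> P u - P v <= tau u v.
  move=> u v Hu Hv Huv.
  have HA := adj_split Huv.
  have HR : `|(u ord0)%:~R - (v ord0)%:~R| + `|(sn u)%:~R - (sn v)%:~R| <= 1 :> R.
    by move: HA; rewrite -(ler_int R) intrD !intr_norm !intrB.
  case: (pselect ((inRhat m1 m2 m3 u \/ inL n m1 u) /\ (inRhat m1 m2 m3 v \/ inL n m1 v))).
  + move=> [Su Sv].
    have /andP [Ht1 Ht2] := HE1 u v Huv Su Sv.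
    have Hct : c <= tau u v by rewrite ge_max; apply/andP; split.
    have SRu := SR_of R Su; have SRv := SR_of R Sv.
    have [Hu1 Hu2] := S_Hf (K := K) Hc0 (ltW (le_lt_trans Hca Hab)) HK1 HKe (ltW (lt_le_trans ltr01 HM1))
        (ltW (lt_le_trans ltr01 HM2)) HM3 F1 F2 F3 SRu.
    have [Hv1 Hv2] := S_Hf (K := K) Hc0 (ltW (le_lt_trans Hca Hab)) HK1 HKe (ltW (lt_le_trans ltr01 HM1))
        (ltW (lt_le_trans ltr01 HM2)) HM3 F1 F2 F3 SRv.
    rewrite /P !Psi_eq // /Hf.
    have Hmix := mix_real R m1 HA.
    have Hsg := sig_good HK1 HKe HM3 ltac:(lra) SRu SRv HR Hmix.
    have : c * sig M2 M3 K (u ord0)%:~R (sn u)%:~R <= c * (sig M2 M3 K (v ord0)%:~R (sn v)%:~R + 1).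
      by rewrite ler_wpM2l.
    lra.
  + move=> HnS.
    have /andP [Ht1 Ht2] := HE2 u v Huv Hu Hv HnS.
    have := Psi_lip mu M2 M3 Hc0 HcK HK1 HR.
    rewrite -/(P u) -/(P v); lra.
have [w [p0 [Hp0 _]]] := descent tau Hx (leqnn n).
apply: lb_le_inf; first by exists (path_weight tau x p0); exists p0.
move=> w' [p [Hp ->]].
have HL := path_lower Hloc Hp.
have Hz : P (@zpt _) <= 0.
  have Ez : (@zpt d.+2) ord0 = 0 by [].
  have Es : sn (@zpt d.+2) = 0 by rewrite /sn big1 // => i _; rewrite normr0.
  rewrite /P Ez Es /Psi normr0 addr0 mulr0 add0r ge_max; apply/andP; split.
    by rewrite ge_min lexx.
  have : 0 <= b * M1 by apply: mulr_ge0; lra.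
  have : 0 <= b * M3 by apply: mulr_ge0; lra.
  rewrite /mu; nra.
have Hxn : `|(x ord0)%:~R| + (sn x)%:~R = Nn :> R.
  by rewrite -intr_norm -intrD -norm1_split Hx.
have Hpx : b * Nn + mu <= P x by rewrite /P /Psi Hxn le_max lexx orbT.
have Hac : a - delta <= c by rewrite le_max lexx.
have E : ((n + 2 * m3)%N%:R : R) = Nn + 2 * M3 by rewrite natrD natrM.
rewrite E.
have : (a - delta) * (Nn + 2 * M3) <= c * (Nn + 2 * M3) by rewrite ler_wpM2r //; lra.
rewrite /mu in Hpx; lra.
Qed.

Unset Implicit Arguments. Set Strict Implicit.

Theorem lemma1 (R : realType) (d : nat) (tau : pt d -> pt d -> R)
  (a b eps delta : R) (n m1 m2 m3 : nat) :
  (2 <= d)%N ->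
  (forall x y, tau x y = tau y x) ->
  (forall x y, 0 <= tau x y) ->
  0 < a -> a < b ->
  eps < (b - a) / (2 * b + 3 * a) ->
  (0 < n)%N -> (0 < m1)%N -> (0 < m2)%N -> (0 < m3)%N ->
  1 <= (m2%:R : R) -> m2%:R <= eps * m3%:R ->
  eps * m3%:R <= eps ^+ 2 * m1%:R -> eps ^+ 2 * m1%:R <= eps ^+ 3 * n%:R ->
  0 < delta ->
  E_event tau a b delta n m1 m2 m3 ->
  (forall y : pt d, inRhat m1 m2 m3 y ->
     T_Lam tau n (scal (- n%:Z) (@e1 d)) y <= a * (n + 2 * m3)%:R + a * m2%:R) /\
  (forall x : pt d, norm1 x = n%:Z ->
     (a - delta) * (n + 2 * m3)%:R + b * m2%:R <= T_Lam tau n x (@zpt d)).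
Proof.
case: d tau => [|[|d]] tau // Hd Hsym Hnn Ha Hab He Hn Hm1 Hm2 Hm3 HM2 H1 H2 H3 Hdel HE.
split; last exact: (part2 Hnn Ha Hab He Hm1 HM2 H1 H2 H3 Hdel HE).
move=> y Hy.
have Hg : goodH tau a n m1 m2 m3.
  by move=> u v Huv Su Sv; case: HE => HE1 _; have /andP [] := HE1 u v Huv Su Sv.
have Hmn : (m1 + m2 + m3 <= n)%N.
  have [_ _ F3 _ _] := Ffacts (c := 0) Ha Hab (lexx 0) (ltW Ha) He (ler0n _ m1) (ler0n _ m3) (ler0n _ n) HM2 H1 H2 H3.
  rewrite -(ler_nat R) !natrD.
  have Hb : 0 < b by lra.
  rewrite -(ler_pM2l Hb); lra.
have [p [Hp Hw]] := part1 Hg (ltW Ha) ltac:(lia) ltac:(lia) Hy.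
apply: le_trans (_ : path_weight tau _ p <= _); last first.
  by apply: le_trans Hw _; rewrite -mulrDr -natrD.
apply: ge_inf; last by exists p.
exists 0 => w [q [_ ->]]; apply: sumr_ge0 => i _; exact: Hnn.
Qed.
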